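(* Let $Q$ be a Foulis quantale, and for $t\in Q$ put $t^\perp=[t^*]$. On $Q$ define the relation $s\le t$ iff $s=t\cdot s$. Then for all $t,r\in Q$ and all $k\in[Q]=\{[t]\mid t\in Q\}$: ( * ) $r^*\cdot t=0 \iff t=[r^*]\cdot t$; ( ** ) $t\le r$ implies $r^\perp\le t^\perp$, and $k^{\perp\perp}=k$; ( *** ) $t\le r^\perp \iff r\le t^\perp$. Moreover, $[Q]$ is a complete orthomodular lattice with the following structure: order $k_1\le k_2$ iff $k_1=k_2\cdot k_1$; top element $1=[0]$; orthocomplement $k^\perp=[k]$; meet $k_1\wedge k_2=\big(k_1\cdot[[k_2]\cdot k_1]\big)^{\perp\perp}$; and for any $S\subseteq[Q]$, join $\bigvee S=[[\bigsqcup S]]$, where $\bigsqcup$ denotes the join in the complete lattice $Q$.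
   Context: A quantale is a complete lattice $Q$ (join $\bigsqcup$, order $\sqsubseteq$) with an associative multiplication distributing over arbitrary joins on both sides; unital if it has a two-sided unit $e$; involutive if equipped with a join-preserving semigroup involution $*$ (so $a^{**}=a$, $(ab)^*=b^*a^*$). A Foulis quantale is a unital involutive quantale $Q$ with an endomap $[-]\colon Q\to Q$ such that: (a) $[s]\cdot[s]=[s]=[s]^*$ for all $s$; (b) $[e]=0$, where $0$ is the least element of $Q$; (c) for all $s,x\in Q$: $s\cdot x=0$ iff there exists $y\in Q$ with $x=[s]\cdot y$. An orthomodular lattice is a bounded lattice with an involutive order-reversing map $x\mapsto x^\perp$ with $x\wedge x^\perp=0$ such that $x\le y$ implies $y=x\vee(x^\perp\wedge y)$. *)

(* Defs.v *)
Set Implicit Arguments.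

Record FoulisQuantale := {
  carrier :> Type;
  qle : carrier -> carrier -> Prop;
  qjoin : (carrier -> Prop) -> carrier;
  qmul : carrier -> carrier -> carrier;
  qunit : carrier;
  qstar : carrier -> carrier;
  br : carrier -> carrier;

  qle_refl : forall a, qle a a;
  qle_antisym : forall a b, qle a b -> qle b a -> a = b;
  qle_trans : forall a b c, qle a b -> qle b c -> qle a c;
  qjoin_ub : forall (S : carrier -> Prop) a, S a -> qle a (qjoin S);
  qjoin_least : forall (S : carrier -> Prop) b,
      (forall a, S a -> qle a b) -> qle (qjoin S) b;

  qmulA : forall a b c, qmul a (qmul b c) = qmul (qmul a b) c;
  qmul_joinr : forall a (S : carrier -> Prop),
      qmul a (qjoin S) = qjoin (fun y => exists x, S x /\ y = qmul a x);
  qmul_joinl : forall a (S : carrier -> Prop),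
      qmul (qjoin S) a = qjoin (fun y => exists x, S x /\ y = qmul x a);

  qmul1l : forall a, qmul qunit a = a;
  qmul1r : forall a, qmul a qunit = a;

  qstarK : forall a, qstar (qstar a) = a;
  qstarM : forall a b, qstar (qmul a b) = qmul (qstar b) (qstar a);
  qstar_join : forall (S : carrier -> Prop),
      qstar (qjoin S) = qjoin (fun y => exists x, S x /\ y = qstar x);

  (* Foulis axioms; the least element 0 is the join of the empty set *)
  br_idem : forall s, qmul (br s) (br s) = br s;
  br_star : forall s, qstar (br s) = br s;
  br_unit : br qunit = qjoin (fun _ => False);
  br_ann : forall s x,
      qmul s x = qjoin (fun _ => False) <-> exists y, x = qmul (br s) y
}.

Section Derived.
Context {Q : FoulisQuantale}.

Definition qbot : carrier Q := qjoin Q (fun _ => False).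

Definition qperp (t : Q) : Q := br Q (qstar Q t).

Definition qrel (s t : Q) : Prop := s = qmul Q t s.

Definition inBr (k : Q) : Prop := exists t, k = br Q t.

Definition brMeet (k1 k2 : Q) : Q :=
  qperp (qperp (qmul Q k1 (br Q (qmul Q (br Q k2) k1)))).

Definition brJoin (S : Q -> Prop) : Q := br Q (br Q (qjoin Q S)).

Definition brJoin2 (k1 k2 : Q) : Q := brJoin (fun x => x = k1 \/ x = k2).

End Derived.

(* Main.v *)
Require Import Defs.
From Stdlib Require Import Setoid.

Section L.
Variable Q : FoulisQuantale.
Local Notation m := (qmul Q).
Local Notation st := (qstar Q).
Local Notation b := (br Q).
Local Notation z := (@qbot Q).
Local Notation le := (qle Q).

Lemma zero_least a : le z a.
Proof. unfold qbot. apply qjoin_least. intros _ []. Qed.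

Lemma le_zero a : le a z -> a = z.
Proof. intro H. apply qle_antisym; auto. apply zero_least. Qed.

Lemma mul0r a : m z a = z.
Proof. apply le_zero. unfold qbot at 1. rewrite qmul_joinl.
  apply qjoin_least. intros y [x [[] _]]. Qed.

Lemma mulr0 a : m a z = z.
Proof. apply le_zero. unfold qbot at 1. rewrite qmul_joinr.
  apply qjoin_least. intros y [x [[] _]]. Qed.

Lemma star0 : st z = z.
Proof. apply le_zero. unfold qbot at 1. rewrite qstar_join.
  apply qjoin_least. intros y [x [[] _]]. Qed.

Lemma star_eq0 a : st a = z -> a = z.
Proof. intro H. rewrite <- (qstarK Q a), H. apply star0. Qed.

Lemma join_ext (P P' : Q -> Prop) : (forall y, P y <-> P' y) -> qjoin Q P = qjoin Q P'.
Proof. intro H. apply qle_antisym; apply qjoin_least; intros a Ha;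
  apply qjoin_ub; apply H; auto. Qed.

Lemma mul_monol a c d : le a c -> le (m a d) (m c d).
Proof. intro H.
  assert (E : qjoin Q (fun y => y = a \/ y = c) = c).
  { apply qle_antisym. apply qjoin_least. intros y [->| ->]; auto using qle_refl.
    apply qjoin_ub. auto. }
  rewrite <- E at 1. rewrite qmul_joinl. apply qjoin_ub. exists a. auto. Qed.

Lemma F1 s : m s (b s) = z.
Proof. apply (proj2 (br_ann Q s (b s))). exists (qunit Q). now rewrite qmul1r. Qed.

Lemma F2 s x : m (b s) x = x <-> m s x = z.
Proof. split.
  - intro H. rewrite <- H, qmulA, F1. apply mul0r.
  - intro H. apply br_ann in H. destruct H as [y ->]. now rewrite qmulA, br_idem. Qed.

Lemma bs_star s : m (b s) (st s) = z.
Proof. rewrite <- (br_star Q s), <- qstarM, F1. apply star0. Qed.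

Lemma brbr_star t : m (b (b t)) (st t) = st t.
Proof. apply F2. apply bs_star. Qed.

Lemma t_brbr t : m t (b (b t)) = t.
Proof. rewrite <- (qstarK Q (m t (b (b t)))), qstarM, br_star, brbr_star. apply qstarK. Qed.

Lemma brbrbr t : b (b (b t)) = b t.
Proof.
  assert (H1 : m (b (b (b t))) (b t) = b t).
  { apply F2. pose proof (bs_star (b t)) as E; rewrite br_star in E; exact E. }
  assert (H2 : m (b t) (b (b (b t))) = b (b (b t))).
  { apply F2. rewrite <- (t_brbr t) at 1. rewrite <- qmulA, F1. apply mulr0. }
  rewrite <- H2. rewrite <- (br_star Q t) at 1. rewrite <- (br_star Q (b (b t))).
  rewrite <- qstarM, H1. apply br_star. Qed.

Lemma proj (k : Q) : inBr k -> m k k = k /\ st k = k.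
Proof. intros [t ->]. split; [apply br_idem | apply br_star]. Qed.
Arguments proj {k}.


Lemma rel_star p q : inBr p -> inBr q -> q = m p q -> q = m q p.
Proof. intros Hp Hq H. destruct (proj Hp) as [_ Sp]. destruct (proj Hq) as [_ Sq].
  rewrite <- Sq. rewrite H at 1. rewrite qstarM, Sp, Sq. reflexivity. Qed.
Arguments rel_star {p q}.


Lemma proj_antisym p q : inBr p -> inBr q -> p = m q p -> q = m p q -> p = q.
Proof. intros Hp Hq H1 H2. rewrite (rel_star Hq Hp H1). rewrite <- H2. reflexivity. Qed.
Arguments proj_antisym {p q}.


Lemma bbk k : inBr k -> b (b k) = k.
Proof. intros [t ->]. apply brbrbr. Qed.
Arguments bbk {k}.


Lemma perp2 (k : Q) : inBr k -> qperp (qperp k) = k.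
Proof. intros [t ->]. unfold qperp. rewrite !br_star. apply brbrbr. Qed.
Arguments perp2 {k}.


Lemma R1 a : m (b (b (st a))) a = a.
Proof. pose proof (brbr_star (st a)) as E. rewrite qstarK in E. exact E. Qed.

Lemma bk_k k : inBr k -> m (b k) k = z.
Proof. intro Hk. pose proof (bs_star k) as E. rewrite (proj2 (proj Hk)) in E. exact E. Qed.
Arguments bk_k {k}.


Lemma bb_b s : m (b (b s)) (b s) = z.
Proof. pose proof (bs_star (b s)) as E. rewrite br_star in E. exact E. Qed.

Lemma R2 p a : inBr p -> m p a = a -> m p (b (b (st a))) = b (b (st a)).
Proof. intros Hp H.
  assert (E1 : m (b p) a = z). { rewrite <- H, qmulA, bk_k by exact Hp. apply mul0r. }
  assert (E2 : m (st a) (b p) = z).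
  { rewrite <- (br_star Q p), <- qstarM, E1. apply star0. }
  apply F2 in E2.
  assert (E3 : m (b (b (st a))) (b p) = z).
  { rewrite <- E2, qmulA, bb_b. apply mul0r. }
  assert (E4 : m (b p) (b (b (st a))) = z).
  { rewrite <- (br_star Q p), <- (br_star Q (b (st a))), <- qstarM, E3. apply star0. }
  apply F2 in E4. rewrite bbk in E4 by exact Hp. exact E4. Qed.
Arguments R2 {p a}.


Lemma meet_lem (k1 k2 : Q) : inBr k1 -> inBr k2 ->
      inBr (brMeet k1 k2) /\ qrel (brMeet k1 k2) k1 /\ qrel (brMeet k1 k2) k2 /\
      (forall p : Q, inBr p -> qrel p k1 -> qrel p k2 -> qrel p (brMeet k1 k2)).
Proof. intros H1 H2.
  set (n := m (b k2) k1). set (m0 := m k1 (b n)).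
  assert (EM : brMeet k1 k2 = b (b (st m0))).
  { unfold brMeet, qperp. rewrite br_star. reflexivity. }
  rewrite EM. unfold qrel. split; [|split; [|split]].
  - eexists; reflexivity.
  - symmetry. apply R2; auto. unfold m0. rewrite qmulA, (proj1 (proj H1)). reflexivity.
  - symmetry. apply R2; auto. unfold m0.
    assert (E : m (b k2) m0 = z). { unfold m0. rewrite qmulA. apply F1. }
    apply F2 in E. rewrite bbk in E by exact H2. exact E.
  - intros p Hp Hp1 Hp2.
    assert (E : m n p = z).
    { unfold n. rewrite <- qmulA, <- Hp1, Hp2, qmulA, bk_k by exact H2. apply mul0r. }
    apply F2 in E.
    assert (E' : m m0 p = p). { unfold m0. rewrite <- qmulA, E. symmetry. exact Hp1. }
    rewrite <- E' at 2. rewrite qmulA, R1. symmetry. exact E'. Qed.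

Lemma join_lem {S : Q -> Prop} : (forall x : Q, S x -> inBr x) ->
      inBr (brJoin S) /\ (forall x : Q, S x -> qrel x (brJoin S)) /\
      (forall p : Q, inBr p -> (forall x : Q, S x -> qrel x p) -> qrel (brJoin S) p).
Proof. intro HS. unfold brJoin, qrel. split; [|split].
  - eexists; reflexivity.
  - intros x Hx. symmetry. apply F2.
    assert (E : m x (b (qjoin Q S)) = z).
    { apply le_zero. rewrite <- (F1 (qjoin Q S)). apply mul_monol. apply qjoin_ub; auto. }
    rewrite <- (br_star Q (qjoin Q S)), <- (proj2 (proj (HS x Hx))), <- qstarM, E.
    apply star0.
  - intros p Hp Hx.
    assert (E : m p (st (qjoin Q S)) = st (qjoin Q S)).
    { assert (ES : st (qjoin Q S) = qjoin Q S).
      { rewrite qstar_join. apply join_ext. intro y. split.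
        - intros [x [Hx0 ->]]. rewrite (proj2 (proj (HS x Hx0))). exact Hx0.
        - intro Hy. exists y. split; auto. symmetry; apply (proj2 (proj (HS y Hy))). }
      rewrite ES, qmul_joinr. apply join_ext. intro y. split.
      - intros [x [Hx' ->]]. rewrite <- Hx by exact Hx'. exact Hx'.
      - intro Hy. exists y. split; auto. }
    pose proof (R2 Hp E) as E'. rewrite qstarK in E'. symmetry. exact E'. Qed.

Arguments meet_lem {k1 k2}.
Lemma orthomod x y : inBr x -> inBr y -> qrel x y ->
      y = brJoin2 x (brMeet (b x) y).
Proof. intros Hx Hy Hxy. unfold qrel in Hxy.
  assert (Hbx : inBr (b x)) by (eexists; reflexivity).
  destruct (meet_lem Hbx Hy) as [Hz [Hz1 [Hz2 Hzg]]].
  set (zz := brMeet (b x) y) in *.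
  set (S := fun w => w = x \/ w = zz).
  assert (HS : forall w, S w -> inBr w) by (intros w [-> | ->]; auto).
  destruct (join_lem HS) as [Hw [Hwub Hwl]].
  unfold brJoin2. fold S.
  apply proj_antisym; auto.
  - unfold brJoin. set (J := qjoin Q S). set (u := b J).
    assert (Hxu : m x u = z).
    { apply le_zero. rewrite <- (F1 J). apply mul_monol. apply qjoin_ub. left; auto. }
    assert (Hzu : m zz u = z).
    { apply le_zero. rewrite <- (F1 J). apply mul_monol. apply qjoin_ub. right; auto. }
    set (a := m y u).
    assert (Hxy' : x = m x y) by exact (rel_star Hy Hx Hxy).
    set (p := b (b (st a))).
    assert (Hp : inBr p) by (eexists; reflexivity).
    assert (Hpy : qrel p y).
    { unfold qrel. symmetry. apply R2; auto. unfold a. rewrite qmulA, (proj1 (proj Hy)). reflexivity. }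
    assert (Hpbx : qrel p (b x)).
    { unfold qrel. symmetry. apply R2; auto. apply F2. unfold a.
      rewrite qmulA, <- Hxy'. exact Hxu. }
    pose proof (Hzg p Hp Hpbx Hpy) as Hpz. unfold qrel in Hpz, Hpy.
    pose proof (rel_star Hz Hp Hpz) as Hpz'. pose proof (rel_star Hy Hp Hpy) as Hpy'.
    assert (Ha : a = z).
    { rewrite <- (R1 a). fold p. unfold a. rewrite qmulA, <- Hpy', Hpz', <- qmulA, Hzu.
      apply mulr0. }
    assert (Ha' : m u y = z).
    { rewrite <- (proj2 (proj Hy)). unfold u. rewrite <- (br_star Q J), <- qstarM.
      fold u. fold a. rewrite Ha. apply star0. }
    apply F2 in Ha'. symmetry. exact Ha'.
  - apply Hwl; auto. intros w [-> | ->]; auto.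
Qed.
End L.
Theorem mainTheorem5 (Q : FoulisQuantale) :
  (* ( * ) *)
  (forall t r : Q,
      qmul Q (qstar Q r) t = (@qbot Q) <-> t = qmul Q (br Q (qstar Q r)) t) /\
  (* ( ** ) *)
  (forall t r : Q, qrel t r -> qrel (qperp r) (qperp t)) /\
  (forall k : Q, inBr k -> qperp (qperp k) = k) /\
  (* ( *** ) *)
  (forall t r : Q, qrel t (qperp r) <-> qrel r (qperp t)) /\
  (* [Q] is a complete orthomodular lattice with the stated structure *)
  (* partial order on [Q] *)
  (forall k : Q, inBr k -> qrel k k) /\
  (forall k1 k2 : Q, inBr k1 -> inBr k2 -> qrel k1 k2 -> qrel k2 k1 -> k1 = k2) /\
  (forall k1 k2 k3 : Q, inBr k1 -> inBr k2 -> inBr k3 ->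
      qrel k1 k2 -> qrel k2 k3 -> qrel k1 k3) /\
  (* top 1 = [0], bottom 0 *)
  inBr (br Q (@qbot Q)) /\
  (forall k : Q, inBr k -> qrel k (br Q (@qbot Q))) /\
  inBr (@qbot Q) /\
  (forall k : Q, inBr k -> qrel (@qbot Q) k) /\
  (* orthocomplement k^⊥ = [k] *)
  (forall k : Q, inBr k -> inBr (br Q k)) /\
  (forall k : Q, inBr k -> br Q (br Q k) = k) /\
  (forall k1 k2 : Q, inBr k1 -> inBr k2 -> qrel k1 k2 -> qrel (br Q k2) (br Q k1)) /\
  (forall k : Q, inBr k -> brMeet k (br Q k) = (@qbot Q)) /\
  (* meet *)
  (forall k1 k2 : Q, inBr k1 -> inBr k2 ->
      inBr (brMeet k1 k2) /\ qrel (brMeet k1 k2) k1 /\ qrel (brMeet k1 k2) k2 /\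
      (forall m : Q, inBr m -> qrel m k1 -> qrel m k2 -> qrel m (brMeet k1 k2))) /\
  (* arbitrary joins *)
  (forall S : Q -> Prop, (forall x : Q, S x -> inBr x) ->
      inBr (brJoin S) /\ (forall x : Q, S x -> qrel x (brJoin S)) /\
      (forall m : Q, inBr m -> (forall x : Q, S x -> qrel x m) -> qrel (brJoin S) m)) /\
  (* orthomodular law *)
  (forall x y : Q, inBr x -> inBr y -> qrel x y ->
      y = brJoin2 x (brMeet (br Q x) y)).
Proof.
  assert (bz : br Q (@qbot Q) = qunit Q).
  { pose proof (proj2 (F2 Q (@qbot Q) (qunit Q)) (mul0r Q _)) as E.
    rewrite qmul1r in E. exact E. }
  assert (P2 : forall t r : Q, qrel t r -> qrel (qperp r) (qperp t)).
  { unfold qrel, qperp. intros t r H. symmetry. apply F2.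
    assert (E : qstar Q t = qmul Q (qstar Q t) (qstar Q r)).
    { rewrite H at 1. apply qstarM. }
    rewrite E, <- qmulA, F1. apply mulr0. }
  split; [|split; [|split; [|split; [|split; [|split; [|split; [|split; [|split; [|split; [|split; [|split; [|split; [|split; [|split; [|split; [|split]]]]]]]]]]]]]]]].
  - intros t r. split; intro H.
    + symmetry. apply F2. exact H.
    + apply F2. symmetry. exact H.
  - exact P2.
  - intros k Hk. apply perp2. exact Hk.
  - intros t r. unfold qrel, qperp.
    assert (E : qstar Q (qmul Q (qstar Q r) t) = qmul Q (qstar Q t) r).
    { rewrite qstarM, qstarK. reflexivity. }
    split; intro H; symmetry; apply F2; symmetry in H; apply F2 in H.
    + rewrite <- E, H. apply star0.
    + apply star_eq0. rewrite E. exact H.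
  - intros k Hk. unfold qrel. symmetry. apply (proj1 (@proj Q _ Hk)).
  - intros k1 k2 H1 H2. apply proj_antisym; auto.
  - intros k1 k2 k3 _ _ _. unfold qrel. intros H1 H2.
    rewrite H1 at 2. rewrite qmulA, <- H2. exact H1.
  - eexists; reflexivity.
  - intros k _. unfold qrel. symmetry. apply F2. apply mul0r.
  - exists (qunit Q). rewrite br_unit. reflexivity.
  - intros k _. unfold qrel. symmetry. apply mulr0.
  - intros k _. eexists; reflexivity.
  - intros k Hk. apply bbk. exact Hk.
  - intros k1 k2 H1 H2 H. pose proof (P2 _ _ H) as E. unfold qperp in E.
    rewrite (proj2 (@proj Q _ H1)), (proj2 (@proj Q _ H2)) in E. exact E.
  - intros k Hk. unfold brMeet, qperp. rewrite (@bbk Q _ Hk), (proj1 (@proj Q _ Hk)), F1, star0, br_star, bz.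
    rewrite br_unit. reflexivity.
  - intros k1 k2 H1 H2. apply meet_lem; auto.
  - intros S HS. apply join_lem. exact HS.
  - intros x y Hx Hy H. apply orthomod; auto.
Qed.
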